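(* Let $Z=(W,A,X,V,E,S)\sim\mathbb{P}$, where only $(W,A,X)$ is observed. Suppose that for all $j\in\{1,\dots,J\}$: (i) $\mathbb{E}[W_j\mid A,X]=\mathbb{E}[V_jE_jS\mid A,X]$; (ii) $V_j$, $E_j$ and $S$ are mutually independent conditionally on $(A,X)$; (iii) $E_j$ is independent of $(A,X)$; and (iv) $S$ is independent of $(A,X)$. Then for every $j$ the parameter $$\Psi^{(2)}_j(\mathbb{P}):=\log\left(\frac{\mathbb{E}\big[\mathbb{E}[V_j\mid A=1,X]\big]}{\mathbb{E}\big[\mathbb{E}[V_j\mid A=0,X]\big]}\right)$$ is identifiable, where the outer expectations are over the marginal distribution of $X$.
   Context: $W\in\mathbb{R}_{\ge 0}^J$ are observed category levels, $A\in\{0,1\}$ a binary exposure, $X\in\mathcal{X}\subseteq\mathbb{R}^p$ covariates, $V\in\mathbb{R}_{\ge0}^J$ latent true category levels, $E\in\mathbb{R}_{>0}^J$ latent category-specific observabilities, $S\in\mathbb{R}_{>0}$ a latent sample-specific scale; data are i.i.d. from $\mathbb{P}$. The parameter is assumed well defined (numerator and denominator positive and finite). A parameter is identifiable if its value is uniquely determined by the distribution of the observed variables $(W,A,X)$ among distributions satisfying the assumptions. *)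

(* Defs.v *)
From HB Require Import structures.
From mathcomp Require Import all_boot all_order all_algebra.
From mathcomp Require Import all_classical all_reals all_analysis.
Set Implicit Arguments. Unset Strict Implicit. Unset Printing Implicit Defensive.
Import Order.TTheory GRing.Theory Num.Theory.
Local Open Scope classical_set_scope.
Local Open Scope ring_scope.

Section defs.
Context {d : measure_display} {Om : measurableType d} {R : realType}.

(* [cexp_version P Y Z g] : g is a version of the conditional expectation
   E_P[Y | Z] in Doob-Dynkin form, i.e. E_P[Y | Z] = g(Z) P-a.s.:
   g is measurable, g(Z) is P-integrable, and for every measurable set B of
   the range of Z,  E_P[Y ; Z in B] = E_P[g(Z) ; Z in B]. *)
Definition cexp_version {d' : measure_display} {T : measurableType d'}
    (P : probability Om R) (Y : Om -> R) (Z : Om -> T) (g : T -> R) : Prop :=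
  [/\ measurable_fun setT g,
      P.-integrable setT (EFin \o (g \o Z)) &
      forall B : set T, measurable B ->
        (\int[P]_(w in Z @^-1` B) (Y w)%:E
         = \int[P]_(w in Z @^-1` B) (g (Z w))%:E)%E].

Definition cond_mutual_indep3 {d' : measure_display} {T : measurableType d'}
    (P : probability Om R) (Y1 Y2 Y3 : Om -> R) (Z : Om -> T) : Prop :=
  forall U1 U2 U3 : set R, measurable U1 -> measurable U2 -> measurable U3 ->
  exists g1 g2 g3 : T -> R,
    [/\ cexp_version P (\1_(Y1 @^-1` U1)) Z g1,
        cexp_version P (\1_(Y2 @^-1` U2)) Z g2,
        cexp_version P (\1_(Y3 @^-1` U3)) Z g3 &
        cexp_version P (\1_(Y1 @^-1` U1 `&` Y2 @^-1` U2 `&` Y3 @^-1` U3)) Z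
          (fun z => g1 z * g2 z * g3 z)].

Definition indep_rv {d' : measure_display} {T : measurableType d'}
    (P : probability Om R) (Y : Om -> R) (Z : Om -> T) : Prop :=
  forall (U : set R) (C : set T), measurable U -> measurable C ->
    P (Y @^-1` U `&` Z @^-1` C) = (P (Y @^-1` U) * P (Z @^-1` C))%E.

Definition observed_events {d' : measure_display} {T : measurableType d'}
    (J : nat) (W : 'I_J -> Om -> R) (A : Om -> bool) (X : Om -> T) : set (set Om) :=
  <<s [set B | (exists j (U : set R), measurable U /\ B = W j @^-1` U)
            \/ (exists b : set bool, B = A @^-1` b)
            \/ (exists C : set T, measurable C /\ B = X @^-1` C)] >>.

Definition same_observed_law {d' : measure_display} {T : measurableType d'}
    (J : nat) (W : 'I_J -> Om -> R) (A : Om -> bool) (X : Om -> T)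
    (P1 P2 : probability Om R) : Prop :=
  forall B, observed_events W A X B -> P1 B = P2 B.

(* "E[ E[Y | A = a, X] ]" computed from a version g of E[Y | (A, X)]: the
   expectation of g(a, X) over the marginal law of X. *)
Definition outer_mean {d' : measure_display} {T : measurableType d'}
    (P : probability Om R) (X : Om -> T) (g : bool * T -> R) (a : bool) : \bar R :=
  (\int[P]_w (g (a, X w))%:E)%E.

Definition psi2_well_defined {d' : measure_display} {T : measurableType d'}
    (P : probability Om R) (Y : Om -> R) (A : Om -> bool) (X : Om -> T) : Prop :=
  exists m1 m0 : R, [/\ 0 < m1, 0 < m0 &
    forall g : bool * T -> R, cexp_version P Y (fun w => (A w, X w)) g ->
      [/\ P.-integrable setT (fun w => (g (true, X w))%:E),
          P.-integrable setT (fun w => (g (false, X w))%:E),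
          outer_mean P X g true = m1%:E & outer_mean P X g false = m0%:E]].

Definition psi2 {d' : measure_display} {T : measurableType d'}
    (P : probability Om R) (X : Om -> T) (g : bool * T -> R) : R :=
  ln (fine (outer_mean P X g true) / fine (outer_mean P X g false)).

Definition model_assumptions {d' : measure_display} {T : measurableType d'}
    (J : nat) (W V E : 'I_J -> Om -> R) (S : Om -> R) (A : Om -> bool) (X : Om -> T)
    (P : probability Om R) : Prop :=
  let Z := fun w => (A w, X w) in
  forall j : 'I_J,
    (* integrability (implicit in the paper) *)
    [/\ P.-integrable setT (EFin \o W j),
        P.-integrable setT (EFin \o V j),
        P.-integrable setT (EFin \o E j),
        P.-integrable setT (EFin \o S) &
        P.-integrable setT (fun w => (V j w * E j w * S w)%:E)] /\
    [/\ exists g, cexp_version P (W j) Z g /\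
                 cexp_version P (fun w => V j w * E j w * S w) Z g,
        cond_mutual_indep3 P (V j) (E j) S Z,
        indep_rv P (E j) Z &
        indep_rv P S Z].

End defs.

(* Main.v *)
Require Import Defs.
From HB Require Import structures.
From mathcomp Require Import all_boot all_order all_algebra.
From mathcomp Require Import all_classical all_reals all_analysis.
Import Order.TTheory GRing.Theory Num.Theory.
Local Open Scope classical_set_scope.
Local Open Scope ring_scope.
From mathcomp Require Import measurable_realfun ring.
Import HBNNSimple.
Set Implicit Arguments. Unset Strict Implicit.
Section L.
Context {d : measure_display} {Om : measurableType d} {R : realType}.
Variable (P : {measure set Om -> \bar R}).
Local Open Scope ereal_scope.

Lemma L0 (Y h : Om -> R) (s : {nnsfun R >-> R}) :
  measurable_fun setT Y -> measurable_fun setT h -> (forall w, (0 <= h w)%R) ->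
  \int[P]_w (h w * s (Y w))%:E =
  \sum_(r \in range s) r%:E * \int[P]_(w in Y @^-1` (s @^-1` [set r])) (h w)%:E.
Proof.
move=> mY mh h0.
have fr : finite_set (range s) by exact: fimfunP.
have mpre r : measurable (Y @^-1` (s @^-1` [set r])).
  by rewrite -[X in measurable X]setTI; apply: mY => //; exact: measurable_sfunP.
have neg r : (r < 0)%R -> Y @^-1` (s @^-1` [set r]) = set0.
  by move=> r0; rewrite preimage_nnfun0 // preimage_set0.
transitivity (\int[P]_w (\sum_(r \in range s)
     (r * (h w * \1_(Y @^-1` (s @^-1` [set r])) w))%:E)).
  apply: eq_integral => w _; rewrite fsumEFin //; congr EFin.
  rewrite (fimfunE s (Y w)) mulr_fsumr; apply: eq_fsbigr => r _.
  by rewrite /= !indicE /preimage /= mulrCA.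
rewrite ge0_integral_fsum //; last 2 first.
- move=> r; apply/measurable_EFinP; apply: measurable_funM => //.
  by apply: measurable_funM => //; apply: measurable_indic.
- move=> r w _; rewrite lee_fin; have [r0|r0] := leP 0%R r.
    by apply: mulr_ge0 => //; apply: mulr_ge0.
  by rewrite neg // indic0 mulr0 mulr0.
apply: eq_fsbigr => r rs.
have [r0|r0] := leP 0%R r.
  transitivity (\int[P]_w (r%:E * (h w * \1_(Y @^-1` (s @^-1` [set r])) w)%:E)).
    by apply: eq_integral => w _; rewrite EFinM.
  rewrite ge0_integralZl_EFin //; last 2 first.
    1,2: first [by apply/measurable_EFinP; apply: measurable_funM => //; apply: measurable_indic
               | by move=> w _; rewrite lee_fin; apply: mulr_ge0].
  congr (_ * _); rewrite [RHS]integral_mkcond; apply: eq_integral => w _.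
  by rewrite /patch indicE; case: (w \in _) => /=; rewrite ?mulr1 ?mulr0.
rewrite neg // integral_set0 mule0; apply: integral0_eq => w _.
by rewrite indic0 !mulr0.
Qed.
End L.
Section L2.
Context {d : measure_display} {Om : measurableType d} {R : realType}.
Variable (P : {measure set Om -> \bar R}).
Local Open Scope ereal_scope.

Lemma L1 (Y h h' : Om -> R) (k : R) :
  measurable_fun setT Y -> (forall w, (0 <= Y w)%R) ->
  measurable_fun setT h -> (forall w, (0 <= h w)%R) ->
  measurable_fun setT h' -> (forall w, (0 <= h' w)%R) -> (0 <= k)%R ->
  (forall U, measurable U -> \int[P]_(w in Y @^-1` U) (h w)%:E
       = k%:E * \int[P]_(w in Y @^-1` U) (h' w)%:E) ->
  \int[P]_w (h w * Y w)%:E = k%:E * \int[P]_w (h' w * Y w)%:E.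
Proof.
move=> mY Y0 mh h0 mh' h'0 k0 hyp.
have mD : measurable (`[0%R, +oo[%classic : set R) by exact: measurable_itv.
have mf : measurable_fun (`[0%R, +oo[%classic : set R) (EFin : R -> \bar R).
  by apply/measurable_EFinP; exact: measurable_id.
pose s := nnsfun_approx mD mf.
have DY w : (`[0%R, +oo[%classic : set R) (Y w) by rewrite /= in_itv /= andbT.
have key (g : Om -> R) : measurable_fun setT g -> (forall w, (0 <= g w)%R) ->
    \int[P]_w (g w * Y w)%:E = limn (fun n => \int[P]_w (g w * s n (Y w))%:E).
  move=> mg g0.
  rewrite -monotone_convergence //; last 3 first.
  - move=> n; apply/measurable_EFinP; apply: measurable_funM => //.
    by apply: measurableT_comp => //.
  - by move=> n w _; rewrite lee_fin; apply: mulr_ge0.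
  - move=> w _ m n mn; rewrite lee_fin; apply: ler_wpM2l => //.
    by have /lefP := nd_nnsfun_approx mD mf mn; apply.
  apply: eq_integral => w _; apply/esym/cvg_lim => //.
  have f0 : forall x, (`[0%R, +oo[%classic : set R) x -> (0 <= (x : R)%:E).
    by move=> x /=; rewrite in_itv /= andbT lee_fin.
  have := cvg_nnsfun_approx mD mf f0 (DY w).
  move/(cvgeZl (y := (g w)%:E) (fin_numE _)).
  by under eq_fun do rewrite -EFinM; rewrite -EFinM.
have sum_eq n : \int[P]_w (h w * s n (Y w))%:E = k%:E * \int[P]_w (h' w * s n (Y w))%:E.
  rewrite !L0 //= ge0_mule_fsumr; last first.
    move=> r; have [r0|r0] := leP 0%R r.
      by apply: mule_ge0; [rewrite lee_fin|apply: integral_ge0 => w _; rewrite lee_fin].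
    by rewrite preimage_nnfun0 // preimage_set0 integral_set0 mule0.
  apply: eq_fsbigr => r _; rewrite hyp; last exact: measurable_sfunP.
  by rewrite muleCA.
rewrite (key h) // (key h') //.
under eq_fun do rewrite sum_eq.
rewrite limeMl //.
apply: ereal_nondecreasing_is_cvgn => m n mn; apply: ge0_le_integral => //.
- by move=> w _; rewrite lee_fin; apply: mulr_ge0.
- by apply/measurable_EFinP; apply: measurable_funM => //; apply: measurableT_comp.
- by apply/measurable_EFinP; apply: measurable_funM => //; apply: measurableT_comp.
- move=> w _; rewrite lee_fin; apply: ler_wpM2l => //.
  by have /lefP := nd_nnsfun_approx mD mf mn; apply.
Qed.
End L2.
Section A.
Context {d : measure_display} {Om : measurableType d} {R : realType}
  {dT : measure_display} {T : measurableType dT}.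
Variables (P : probability Om R) (Z : Om -> T) (mZ : measurable_fun setT Z).
Local Open Scope ereal_scope.

Lemma mpre (A : set T) : measurable A -> measurable (Z @^-1` A).
Proof. by move=> mA; rewrite -[X in measurable X]setTI; exact: mZ. Qed.

Definition pushZ := measure_function_pushforward__canonical__measure_function_Measure P mZ.

Lemma version_cst (Y : Om -> R) (g : T -> R) (c : R) (B : set T) : measurable B ->
  cexp_version P Y Z g ->
  (forall C, measurable C ->
     \int[P]_(w in Z @^-1` C) (Y w)%:E = c%:E * P (Z @^-1` C)) ->
  ae_eq pushZ B (EFin \o g) (cst c%:E).
Proof.
move=> mB [mg ig hg] hc.
apply: integral_ae_eq => //.
- apply: (integrable_pushforward mZ) => //; first exact/measurable_EFinP.
  apply: integrableS ig => //; exact: mpre.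
- move=> C CB mC.
  rewrite (integral_pushforward mZ) //; first last.
  + apply: integrableS ig => //; exact: mpre.
  + exact/measurable_EFinP.
  rewrite -hg // hc // integral_cst //.
Qed.
End A.
Section A2.
Context {d : measure_display} {Om : measurableType d} {R : realType}
  {dT : measure_display} {T : measurableType dT}.
Variables (P : probability Om R) (Z : Om -> T) (mZ : measurable_fun setT Z).
Local Open Scope ereal_scope.

Lemma stepA (V E S : Om -> R) (U1 U2 U3 : set R) (B : set T) :
  measurable U1 -> measurable U2 -> measurable U3 -> measurable B ->
  measurable_fun setT V -> measurable_fun setT E -> measurable_fun setT S ->
  cond_mutual_indep3 P V E S Z -> indep_rv P E Z -> indep_rv P S Z ->
  P (V @^-1` U1 `&` E @^-1` U2 `&` S @^-1` U3 `&` Z @^-1` B) =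
  P (E @^-1` U2) * P (S @^-1` U3) * P (V @^-1` U1 `&` Z @^-1` B).
Proof.
move=> mU1 mU2 mU3 mB mV mE mS CI iE iS.
have mpV : measurable (V @^-1` U1) by rewrite -[X in measurable X]setTI; exact: mV.
have mpE : measurable (E @^-1` U2) by rewrite -[X in measurable X]setTI; exact: mE.
have mpS : measurable (S @^-1` U3) by rewrite -[X in measurable X]setTI; exact: mS.
have mZB := mpre mZ mB.
have [g1 [g2 [g3 [c1 c2 c3 c123]]]] := CI U1 U2 U3 mU1 mU2 mU3.
set p2 := fine (P (E @^-1` U2)); set p3 := fine (P (S @^-1` U3)).
have ep2 : P (E @^-1` U2) = p2%:E by rewrite fineK // fin_num_measure.
have ep3 : P (S @^-1` U3) = p3%:E by rewrite fineK // fin_num_measure.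
have ae2 : ae_eq (pushZ P mZ) B (EFin \o g2) (cst p2%:E).
  apply: (version_cst mZ mB c2).
  move=> C0 mC.
  have h := iE U2 C0 mU2 mC.
  have mZC := mpre mZ mC.
  rewrite integral_indic //.
  move: h; rewrite ep2 => h; exact h.
have ae3 : ae_eq (pushZ P mZ) B (EFin \o g3) (cst p3%:E).
  apply: (version_cst mZ mB c3).
  move=> C0 mC.
  have h := iS U3 C0 mU3 mC.
  have mZC := mpre mZ mC.
  rewrite integral_indic //.
  move: h; rewrite ep3 => h; exact h.
have [mg1 ig1 hg1] := c1.
have [_ i123 h123] := c123.
have := h123 B mB.
rewrite integral_indic //; last by apply: measurableI => //; apply: measurableI.
move=> ->.
have mg123 : measurable_fun setT (fun z => g1 z * g2 z * g3 z)%R.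
  by case: c2 => mg2 _ _; case: c3 => mg3 _ _; apply: measurable_funM => //; apply: measurable_funM.
rewrite -[LHS](integral_pushforward mZ (f := EFin \o (fun z => g1 z * g2 z * g3 z)%R)) //; last 2 first.
- have H := (measurable_EFinP setT (fun z => g1 z * g2 z * g3 z)%R).2 mg123. exact H.
- by apply: integrableS i123 => //.
rewrite (ae_eq_integral (fun z => (p2 * p3)%:E * (g1 z)%:E)) //; last 3 first.
- apply: measurable_funTS; exact: ((measurable_EFinP _ _).2 mg123).
- apply: emeasurable_funM; first exact: measurable_cst.
  apply: measurable_funTS; exact: ((measurable_EFinP _ _).2 mg1).
- move: ae2 ae3; apply: filterS2 => z h2 h3 Bz.
  have /= [e2] := h2 Bz; have /= [e3] := h3 Bz.
  by rewrite /= e2 e3 -EFinM; congr EFin; ring.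
rewrite integralZl //; last first.
  apply: (integrable_pushforward mZ) => //; first exact/measurable_EFinP.
  by apply: integrableS ig1.
rewrite (integral_pushforward mZ) //; last first.
  by apply: integrableS ig1.
  exact/measurable_EFinP.
rewrite -hg1 // integral_indic //; last first.
by rewrite ep2 ep3 EFinM.
Qed.
End A2.
Section F.
Context {d : measure_display} {Om : measurableType d} {R : realType}
  {dT : measure_display} {T : measurableType dT}.
Variables (P : probability Om R) (Z : Om -> T) (mZ : measurable_fun setT Z).
Variables (V E S : Om -> R) (mV : measurable_fun setT V) (mE : measurable_fun setT E)
  (mS : measurable_fun setT S).
Hypotheses (V0 : forall w, (0 <= V w)%R) (E0 : forall w, (0 <= E w)%R) (S0 : forall w, (0 <= S w)%R).
Hypotheses (CI : cond_mutual_indep3 P V E S Z) (iE : indep_rv P E Z) (iS : indep_rv P S Z).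
Local Open Scope ereal_scope.

Lemma PE (A : set Om) : measurable A -> P A = (fine (P A))%:E.
Proof. by move=> mA; rewrite fineK // fin_num_measure. Qed.

Lemma int_indic (A : set Om) (f : Om -> R) : measurable A ->
  \int[P]_(w in A) (f w)%:E = \int[P]_w (\1_A w * f w)%:E.
Proof.
move=> mA; rewrite integral_mkcond; apply: eq_integral => w _.
by rewrite /patch indicE; case: (w \in A) => /=; rewrite ?mul1r ?mul0r.
Qed.

Lemma int_one (A : set Om) : measurable A -> \int[P]_(w in A) (1%R)%:E = P A.
Proof. by move=> mA; rewrite integral_cst // mul1e. Qed.

Let mpr (Y : Om -> R) (U : set R) : measurable_fun setT Y -> measurable U ->
  measurable (Y @^-1` U).
Proof. by move=> mY mU; rewrite -[X in measurable X]setTI; exact: mY. Qed.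

Variables (B : set T) (mB : measurable B).

Lemma stepA' (U1 U2 : set R) : measurable U1 -> measurable U2 ->
  P (V @^-1` U1 `&` E @^-1` U2 `&` Z @^-1` B) =
  P (E @^-1` U2) * P (V @^-1` U1 `&` Z @^-1` B).
Proof.
move=> mU1 mU2.
have := stepA mZ mU1 mU2 measurableT mB mV mE mS CI iE iS.
rewrite preimage_setT setIT probability_setT mule1 => h; exact h.
Qed.


Lemma PP (A : set Om) : (P : {measure set Om -> \bar R}) A = P A.
Proof. by []. Qed.

Hypotheses (intE : P.-integrable setT (EFin \o E)) (intS : P.-integrable setT (EFin \o S)).

Lemma stepB (U1 U2 : set R) : measurable U1 -> measurable U2 ->
  \int[P]_w (\1_(V @^-1` U1 `&` E @^-1` U2 `&` Z @^-1` B) w * S w)%:E =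
  P (V @^-1` U1 `&` E @^-1` U2 `&` Z @^-1` B) * \int[P]_w (S w)%:E.
Proof.
move=> mU1 mU2.
set F := V @^-1` U1 `&` E @^-1` U2 `&` Z @^-1` B.
have mF : measurable F.
  by apply: measurableI; [apply: measurableI; apply: mpr|apply: mpre].
rewrite (PE mF).
transitivity ((fine (P F))%:E * \int[P]_w ((fun=> 1%R) w * S w)%:E); last first.
  by congr (_ * _); apply: eq_integral => w _; rewrite mul1r.
apply: L1 => //; first by apply: fine_ge0; apply: measure_ge0.
move=> U mU.
rewrite integral_indic //; last exact: mpr.
rewrite int_one; last exact: mpr.
rewrite -(PE mF) !PP.
have -> : F `&` S @^-1` U = V @^-1` U1 `&` E @^-1` U2 `&` S @^-1` U `&` Z @^-1` B.
  by rewrite /F setIAC.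
rewrite (stepA mZ mU1 mU2 mU mB mV mE mS CI iE iS) /F (stepA' mU1 mU2).
by rewrite muleAC.
Qed.


Let cS := fine (\int[P]_w (S w)%:E).
Let cE := fine (\int[P]_w (E w)%:E).
Let eS : \int[P]_w (S w)%:E = cS%:E.
Proof. by rewrite /cS fineK //; exact: integrable_fin_num intS. Qed.
Let eE : \int[P]_w (E w)%:E = cE%:E.
Proof. by rewrite /cE fineK //; exact: integrable_fin_num intE. Qed.
Let cS0 : (0 <= cS)%R.
Proof. by apply: fine_ge0; apply: integral_ge0 => w _; rewrite lee_fin. Qed.
Let cE0 : (0 <= cE)%R.
Proof. by apply: fine_ge0; apply: integral_ge0 => w _; rewrite lee_fin. Qed.

Lemma ind2 (X Y : set Om) (w : Om) : (\1_X w * \1_Y w = \1_(X `&` Y) w :> R)%R.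
Proof. by rewrite indicI. Qed.

Lemma stepC (U1 : set R) : measurable U1 ->
  \int[P]_w ((\1_(V @^-1` U1 `&` Z @^-1` B) w * S w) * E w)%:E =
  (cS * fine (P (V @^-1` U1 `&` Z @^-1` B)))%:E * cE%:E.
Proof.
move=> mU1.
set F := V @^-1` U1 `&` Z @^-1` B.
have mF : measurable F by apply: measurableI; [apply: mpr|apply: mpre].
rewrite -eE.
transitivity ((cS * fine (P F))%:E * \int[P]_w ((fun=> 1%R) w * E w)%:E); last first.
  by congr (_ * _); apply: eq_integral => w _; rewrite mul1r.
apply: L1 => //.
- by apply: measurable_funM => //; exact: measurable_indic.
- by move=> w; apply: mulr_ge0 => //; rewrite indicE; case: (_ \in _).
- by apply: mulr_ge0 => //; apply: fine_ge0; apply: measure_ge0.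
move=> U mU.
rewrite int_indic; last exact: mpr.
rewrite int_one; last exact: mpr.
transitivity (\int[P]_w (\1_(V @^-1` U1 `&` E @^-1` U `&` Z @^-1` B) w * S w)%:E).
  apply: eq_integral => w _; rewrite mulrA ind2.
  by rewrite /F setIC -setIA setIAC setIA.
rewrite stepB // ?PP (stepA' mU1 mU) -/F (PE mF) eS.
rewrite (PE (mpr mE mU)) /= -!EFinM; congr EFin; ring.
Qed.

Lemma stepD : \int[P]_(w in Z @^-1` B) (V w * E w * S w)%:E =
  (cE * cS)%:E * \int[P]_(w in Z @^-1` B) (V w)%:E.
Proof.
have mZB := mpre mZ mB.
rewrite [LHS](int_indic _ mZB) [in RHS](int_indic _ mZB).
transitivity (\int[P]_w ((\1_(Z @^-1` B) w * S w * E w) * V w)%:E).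
  by apply: eq_integral => w _; congr EFin; ring.
apply: L1 => //.
- apply: measurable_funM => //; apply: measurable_funM => //; exact: measurable_indic.
- move=> w; apply: mulr_ge0 => //; apply: mulr_ge0 => //.
- exact: mulr_ge0.
move=> U mU.
have mVU := mpr mV mU.
rewrite [LHS](int_indic _ mVU).
transitivity (\int[P]_w ((\1_(V @^-1` U `&` Z @^-1` B) w * S w) * E w)%:E).
  by apply: eq_integral => w _; rewrite !mulrA ind2.
rewrite stepC // integral_indic // setIC ?PP (PE (measurableI _ _ mZB mVU)) /= -!EFinM.
by congr EFin; ring.
Qed.

End F.
Section Pos.
Context {d : measure_display} {Om : measurableType d} {R : realType}.
Local Open Scope ereal_scope.
Lemma int_pos (P : probability Om R) (f : Om -> R) : measurable_fun setT f ->
  (forall w, (0 < f w)%R) -> P.-integrable setT (EFin \o f) ->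
  (0 < fine (\int[P]_w (f w)%:E))%R.
Proof.
move=> mf f0 fi; apply: fine_gt0; apply/andP; split; last first.
  by have /fin_numPlt/andP[_] := integrable_fin_num measurableT fi.
rewrite lt_neqAle integral_ge0 ?andbT; last by move=> w _; rewrite lee_fin ltW.
apply/negP => /eqP /esym h0.
have : \int[P]_(w in setT) `|(EFin \o f) w| = 0.
  rewrite -h0; apply: eq_integral => w _; apply: gee0_abs; rewrite /= lee_fin ltW //.
have mfE : measurable_fun setT (EFin \o f) by exact/measurable_EFinP.
move/(ae_eq_integral_abs P measurableT mfE).

case=> A [mA PA0 NA].
have : P setT <= P A.
  apply: le_measure; rewrite ?inE //.
  move=> w _; apply: NA => /= /(_ Logic.I) [] /eqP; rewrite gt_eqF //.
by rewrite PA0 probability_setT lee_fin ler10.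
Qed.
End Pos.
Section Obs.
Context {d : measure_display} {Om : measurableType d}.

Lemma pair_obs {d1 d2 : measure_display} {T1 : measurableType d1} {T2 : measurableType d2}
  (Obs : set (set Om)) (O1 : Om -> T1) (O2 : Om -> T2) :
  sigma_algebra setT Obs ->
  (forall B, measurable B -> Obs (O1 @^-1` B)) ->
  (forall B, measurable B -> Obs (O2 @^-1` B)) ->
  forall D : set (T1 * T2), measurable D -> Obs ((fun w => (O1 w, O2 w)) @^-1` D).
Proof.
move=> sO h1 h2 D mD.
suff : image_set_system setT (fun w => (O1 w, O2 w)) Obs D by rewrite /image_set_system /= setTI.
move: D mD; apply: smallest_sub; first exact: sigma_algebra_image.
move=> D [] [B mB <-{D}]; rewrite /image_set_system /= !setTI.
- by have := h1 B mB; congr Obs.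
- by have := h2 B mB; congr Obs.
Qed.
End Obs.

Section Tr.
Context {d : measure_display} {Om : measurableType d} {R : realType}
  {dT : measure_display} {T : measurableType dT}.
Variables (P1 P2 : probability Om R) (O : Om -> T) (mO : measurable_fun setT O).
Hypothesis hO : forall D, measurable D -> P1 (O @^-1` D) = P2 (O @^-1` D).
Local Open Scope ereal_scope.

Lemma tr_ge0 (f : T -> \bar R) (D : set T) : measurable D -> measurable_fun setT f ->
  (forall x, 0 <= f x) ->
  \int[P1]_(w in O @^-1` D) (f \o O) w = \int[P2]_(w in O @^-1` D) (f \o O) w.
Proof.
move=> mD mf f0.
rewrite -(ge0_integral_pushforward mO) //; last exact: measurable_funTS.
rewrite -(ge0_integral_pushforward mO) //; last exact: measurable_funTS.
apply: eq_measure_integral => A mA _; exact: hO.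
Qed.

Lemma tr_int (f : T -> R) (D : set T) : measurable D -> measurable_fun setT f ->
  P1.-integrable (O @^-1` D) (EFin \o (f \o O)) ->
  P2.-integrable (O @^-1` D) (EFin \o (f \o O)) /\
  \int[P1]_(w in O @^-1` D) (f (O w))%:E = \int[P2]_(w in O @^-1` D) (f (O w))%:E.
Proof.
move=> mD mf i1.
have mfE : measurable_fun setT (EFin \o f) by exact/measurable_EFinP.
have i2 : P2.-integrable (O @^-1` D) (EFin \o (f \o O)).
  apply/integrableP; split.
    apply: measurable_funTS; apply/measurable_EFinP; exact: measurableT_comp.
  have := tr_ge0 (f := fun x => `|(f x)%:E|) mD _ _.
  move=> <- //; first by case/integrableP : i1.
  by apply: measurableT_comp.
split => //.
have := integral_pushforward mO mfE i1 mD.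
have := integral_pushforward mO mfE i2 mD.
move=> <- <-; apply: eq_measure_integral => A mA _; exact: hO.
Qed.
End Tr.
Lemma keyW {d : measure_display} {Om : measurableType d} {R : realType}
  {dT : measure_display} {T : measurableType dT}
  (P : probability Om R) (Z : Om -> T) (mZ : measurable_fun setT Z)
  (W V E S : Om -> R) (gW : T -> R) :
  measurable_fun setT V -> measurable_fun setT E -> measurable_fun setT S ->
  (forall w, (0 <= V w)%R) -> (forall w, (0 <= E w)%R) -> (forall w, (0 <= S w)%R) ->
  cond_mutual_indep3 P V E S Z -> indep_rv P E Z -> indep_rv P S Z ->
  P.-integrable setT (EFin \o E) -> P.-integrable setT (EFin \o S) ->
  cexp_version P W Z gW -> cexp_version P (fun w => V w * E w * S w) Z gW ->
  forall B, measurable B ->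
  (\int[P]_(w in Z @^-1` B) (W w)%:E =
   (fine (\int[P]_w (E w)%:E) * fine (\int[P]_w (S w)%:E))%:E *
     \int[P]_(w in Z @^-1` B) (V w)%:E)%E.
Proof.
move=> mV mE mS V0 E0 S0 CI iE iS intE intS [_ _ h1] [_ _ h2] B mB.
rewrite h1 // -h2 //.
exact: (stepD mZ mV mE mS V0 E0 S0 CI iE iS mB intE intS).
Qed.

Unset Implicit Arguments. Set Strict Implicit.

Theorem mainTheorem3
    (R : realType) (d : measure_display) (Om : measurableType d)
    (dX : measure_display) (TX : measurableType dX)
    (J : nat) (W V E : 'I_J -> Om -> R) (S : Om -> R)
    (A : Om -> bool) (X : Om -> TX)
    (mW : forall j, measurable_fun setT (W j))
    (mV : forall j, measurable_fun setT (V j))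
    (mE : forall j, measurable_fun setT (E j))
    (mS : measurable_fun setT S)
    (mA : measurable_fun setT A) (mX : measurable_fun setT X)
    (W_ge0 : forall j w, 0 <= W j w) (V_ge0 : forall j w, 0 <= V j w)
    (E_gt0 : forall j w, 0 < E j w) (S_gt0 : forall w, 0 < S w)
    (j : 'I_J) (P1 P2 : probability Om R) :
  model_assumptions W V E S A X P1 ->
  model_assumptions W V E S A X P2 ->
  psi2_well_defined P1 (V j) A X ->
  psi2_well_defined P2 (V j) A X ->
  same_observed_law W A X P1 P2 ->
  forall g1 g2 : bool * TX -> R,
    cexp_version P1 (V j) (fun w => (A w, X w)) g1 ->
    cexp_version P2 (V j) (fun w => (A w, X w)) g2 ->
    psi2 P1 X g1 = psi2 P2 X g2.
Proof.
move=> M1 M2 WD1 WD2 SL g1 g2 c1 c2.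
set Z := fun w => (A w, X w).
have mZ : measurable_fun setT Z by exact: measurable_fun_pair.
have sO : sigma_algebra setT (observed_events W A X) by exact: smallest_sigma_algebra.
have obsZ : forall D, measurable D -> observed_events W A X (Z @^-1` D).
  apply: pair_obs => // B mB; apply: sub_sigma_algebra.
    by right; left; exists B.
  by right; right; exists B.
have obsWZ : forall D, measurable D ->
    observed_events W A X ((fun w => (W j w, Z w)) @^-1` D).
  apply: pair_obs => // B mB; apply: sub_sigma_algebra.
  by left; exists j, B.
have hZ D : measurable D -> P1 (Z @^-1` D) = P2 (Z @^-1` D).
  by move=> mD; apply: SL; exact: obsZ.
have hWZ D : measurable D -> P1 ((fun w => (W j w, Z w)) @^-1` D) =
    P2 ((fun w => (W j w, Z w)) @^-1` D).
  by move=> mD; apply: SL; exact: obsWZ.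
have [[intW1 intV1 intE1 intS1 _] [[gW1 [vW1 vV1]] CI1 iE1 iS1]] := M1 j.
have [[intW2 intV2 intE2 intS2 _] [[gW2 [vW2 vV2]] CI2 iE2 iS2]] := M2 j.
set k1 := (fine (\int[P1]_w (E j w)%:E) * fine (\int[P1]_w (S w)%:E))%R.
set k2 := (fine (\int[P2]_w (E j w)%:E) * fine (\int[P2]_w (S w)%:E))%R.
have E0 w : 0 <= E j w by exact: ltW.
have S0 w : 0 <= S w by exact: ltW.
have key1 := keyW mZ (mV j) (mE j) mS (V_ge0 j) E0 S0 CI1 iE1 iS1 intE1 intS1 vW1 vV1.
have key2 := keyW mZ (mV j) (mE j) mS (V_ge0 j) E0 S0 CI2 iE2 iS2 intE2 intS2 vW2 vV2.
have k1_gt0 : 0 < k1 by apply: mulr_gt0; apply: int_pos.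
have k2_gt0 : 0 < k2 by apply: mulr_gt0; apply: int_pos.
have [mg1 ig1 hg1] := c1.
have mZB B : measurable B -> measurable (Z @^-1` B) by move=> mB; exact: mpre.
have trg1 B : measurable B ->
   P2.-integrable (Z @^-1` B) (EFin \o (g1 \o Z)) /\
   (\int[P1]_(w in Z @^-1` B) (g1 (Z w))%:E = \int[P2]_(w in Z @^-1` B) (g1 (Z w))%:E)%E.
  move=> mB; apply: (tr_int mZ hZ mB mg1).
  by apply: integrableS ig1 => //; exact: mZB.
set O := fun w => (W j w, Z w).
have mO : measurable_fun setT O by exact: measurable_fun_pair.
have trW B : measurable B ->
   (\int[P1]_(w in Z @^-1` B) (W j w)%:E = \int[P2]_(w in Z @^-1` B) (W j w)%:E)%E.
  move=> mB.
  have mD : measurable (setT `*` B : set (R * (bool * TX))) by exact: measurableX.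
  have eO : O @^-1` (setT `*` B) = Z @^-1` B.
    by apply/seteqP; split => w /=; [case|].
  have := tr_int mO hWZ mD (f := fst) measurable_fst.
  rewrite eO => -[] //.
  by apply: integrableS intW1 => //; exact: mZB.
set g' := fun z => k1 / k2 * g1 z.
have c' : cexp_version P2 (V j) Z g'.
  split.
  - by apply: measurable_funM => //; exact: measurable_cst.
  - have [i2 _] := trg1 setT measurableT.
    rewrite preimage_setT in i2.
    have := integrableZl measurableT (k1 / k2) i2.
    by apply: eq_integrable => // w _; rewrite /= EFinM.
  - move=> B mB.
    have [i2 t2] := trg1 B mB.
    have fV : (\int[P2]_(w in Z @^-1` B) (V j w)%:E)%E \is a fin_num.
      by apply: integrable_fin_num; [exact: mZB|apply: integrableS intV2 => //; exact: mZB].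
    have -> : (\int[P2]_(w in Z @^-1` B) (V j w)%:E = (k2^-1)%:E * \int[P2]_(w in Z @^-1` B) (W j w)%:E)%E.
      by rewrite key2 // muleA -EFinM mulVf ?gt_eqF // mul1e.
    rewrite -trW // key1 // -/k1 hg1 // t2.
    rewrite [RHS](eq_integral (fun w => (k1 / k2)%:E * (g1 (Z w))%:E)%E); last first.
      by move=> w _; rewrite /g' EFinM.
    rewrite integralZl //; last exact: mZB.
    by rewrite muleA -EFinM mulrC.
have [m1 [m0 [m1p m0p H1]]] := WD1.
have [n1 [n0 [n1p n0p H2]]] := WD2.
have [i1 i0 e1 e0] := H1 g1 c1.
have [_ _ f1 f0] := H2 g2 c2.
have [_ _ f1' f0'] := H2 g' c'.
have om a : P1.-integrable setT (fun w => (g1 (a, X w))%:E) ->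
    outer_mean P2 X g' a = ((k1 / k2)%:E * outer_mean P1 X g1 a)%E.
  move=> ia.
  have mf : measurable_fun setT (fun z : bool * TX => g1 (a, z.2)).
    apply: measurableT_comp => //; apply: measurable_fun_pair => //.
  have := tr_int mZ hZ measurableT mf.
  rewrite preimage_setT => -[] // i2 t2.
  rewrite /outer_mean t2 -integralZl //.
have := om true i1; rewrite f1' e1 -EFinM => -[en1].
have := om false i0; rewrite f0' e0 -EFinM => -[en0].
rewrite /psi2 e1 e0 f1 f0 en1 en0 /=.
congr ln; field.
by rewrite !gt_eqF.
Qed.
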